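(* A Banach $f$-algebra $E$ is $mw$-continuous if and only if, for every net $(x_\alpha)$ in $E$, $x_\alpha\downarrow0$ implies $x_\alpha\xrightarrow{mw}0$.
   Context: All vector lattices are real and Archimedean. An $f$-algebra is a vector lattice with an associative multiplication making it an algebra, such that products of positive elements are positive and $x\wedge y=0$ implies $(xz)\wedge y=(zx)\wedge y=0$ for all $z\ge0$. A Banach $f$-algebra is an $f$-algebra which is a Banach lattice with $\|xy\|\le\|x\|\|y\|$. A net $(x_\alpha)$ in $E$ $mw$-converges to $x$ ($x_\alpha\xrightarrow{mw}x$) if $|x_\alpha-x|u\to0$ weakly for every $u\in E_+$. A net $(x_\alpha)$ order converges to $x$ ($x_\alpha\xrightarrow{o}x$) if there is a net $y_\beta\downarrow0$ such that for every $\beta$ there is $\alpha_0$ with $|x_\alpha-x|\le y_\beta$ for all $\alpha\ge\alpha_0$. $E$ is called $mw$-continuous if $x_\alpha\xrightarrow{o}0$ implies $x_\alpha\xrightarrow{mw}0$. *)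

(* Defs.v *)
From HB Require Import structures.
From mathcomp Require Import all_boot all_order all_algebra.
From mathcomp Require Import all_classical all_reals all_analysis.
Import Order.TTheory GRing.Theory Num.Theory.
Import numFieldNormedType.Exports.
Local Open Scope ring_scope.

Definition directed {D : Type} (leD : D -> D -> Prop) : Prop :=
  [/\ inhabited D,
      (forall a, leD a a),
      (forall a b c, leD a b -> leD b c -> leD a c) &
      (forall a b, exists c, leD a c /\ leD b c)].

Definition net_cvgR {R : realType} {D : Type} (leD : D -> D -> Prop)
  (r : D -> R) (l : R) : Prop :=
  forall e : R, 0 < e -> exists a0, forall a, leD a0 a -> `|r a - l| < e.

Definition is_clf {R : realType} {E : normedModType R} (f : E -> R) : Prop :=
  [/\ (forall x y, f (x + y) = f x + f y),
      (forall (a : R) x, f (a *: x) = a * f x) &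
      continuous f].

Definition weak_cvg {R : realType} {E : normedModType R}
  {D : Type} (leD : D -> D -> Prop) (x : D -> E) (l : E) : Prop :=
  forall f : E -> R, is_clf f -> net_cvgR leD (fun a => f (x a)) (f l).

Section LatticeAlgebra.
Context {R : realType} {E : normedModType R}.
Variables (le : E -> E -> Prop) (join : E -> E -> E) (mul : E -> E -> E).

Definition lat_meet (x y : E) : E := - join (- x) (- y).
Definition lat_abs (x : E) : E := join x (- x).

Definition vector_lattice : Prop :=
  (forall x, le x x) /\
  (forall x y, le x y -> le y x -> x = y) /\
  (forall x y z, le x y -> le y z -> le x z) /\
  (forall x y z, le x y -> le (x + z) (y + z)) /\
  (forall (a : R) x y, 0 <= a -> le x y -> le (a *: x) (a *: y)) /\
  (forall x y, le x (join x y) /\ le y (join x y) /\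
               (forall z, le x z -> le y z -> le (join x y) z)) /\
  (forall x y, le 0 x -> le 0 y -> (forall n : nat, le (x *+ n) y) -> x = 0).

Definition f_algebra : Prop :=
  vector_lattice /\
  (forall x y z, mul (mul x y) z = mul x (mul y z)) /\
  (forall x y z, mul (x + y) z = mul x z + mul y z) /\
  (forall x y z, mul x (y + z) = mul x y + mul x z) /\
  (forall (a : R) x y, mul (a *: x) y = a *: mul x y /\ mul x (a *: y) = a *: mul x y) /\
  (forall x y, le 0 x -> le 0 y -> le 0 (mul x y)) /\
  (forall x y z, lat_meet x y = 0 -> le 0 z ->
     lat_meet (mul x z) y = 0 /\ lat_meet (mul z x) y = 0).

(** Banach f-algebra (completeness of E is imposed by its type in the theorem). *)
Definition banach_f_algebra : Prop :=
  [/\ f_algebra,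
      (forall x y, le (lat_abs x) (lat_abs y) -> `|x| <= `|y|) &
      (forall x y, `|mul x y| <= `|x| * `|y|)].

Definition mw_cvg {D : Type} (leD : D -> D -> Prop) (x : D -> E) (l : E) : Prop :=
  forall u, le 0 u -> weak_cvg leD (fun a => mul (lat_abs (x a - l)) u) 0.

Definition decr_to_0 {D : Type} (leD : D -> D -> Prop) (y : D -> E) : Prop :=
  [/\ (forall a b, leD a b -> le (y b) (y a)),
      (forall a, le 0 (y a)) &
      (forall z, (forall a, le z (y a)) -> le z 0)].

Definition order_cvg {D : Type} (leD : D -> D -> Prop) (x : D -> E) (l : E) : Prop :=
  exists (B : Type) (leB : B -> B -> Prop) (y : B -> E),
    [/\ directed leB, decr_to_0 leB y &
        forall b, exists a0, forall a, leD a0 a -> le (lat_abs (x a - l)) (y b)].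

Definition mw_continuous : Prop :=
  forall (D : Type) (leD : D -> D -> Prop), directed leD ->
    forall x : D -> E, order_cvg leD x 0 -> mw_cvg leD x 0.

End LatticeAlgebra.

(* Main.v *)
Require Import Defs.
From HB Require Import structures.
From mathcomp Require Import all_boot all_order all_algebra.
From mathcomp Require Import all_classical all_reals all_analysis.
From mathcomp Require Import lra.
Import Order.TTheory GRing.Theory Num.Theory.
Import numFieldNormedType.Exports.
Local Open Scope ring_scope.
Local Open Scope classical_set_scope.
Set Implicit Arguments.
Unset Strict Implicit.

Section VL.
Context {R : realType} {E : normedModType R} (le : E -> E -> Prop) (join : E -> E -> E).
Hypothesis HV : vector_lattice le join.

Lemma vl_refl x : le x x.
Proof. by case: HV. Qed.
Lemma vl_anti x y : le x y -> le y x -> x = y.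
Proof. by case: HV => _ [H _]; apply: H. Qed.
Lemma vl_trans x y z : le x y -> le y z -> le x z.
Proof. by case: HV => _ [_ [H _]]; apply: H. Qed.
Lemma vl_add x y z : le x y -> le (x + z) (y + z).
Proof. by case: HV => _ [_ [_ [H _]]]; apply: H. Qed.
Lemma vl_scale (a : R) x y : 0 <= a -> le x y -> le (a *: x) (a *: y).
Proof. by case: HV => _ [_ [_ [_ [H _]]]]; apply: H. Qed.
Lemma vl_ub1 x y : le x (join x y).
Proof. by case: HV => _ [_ [_ [_ [_ [H _]]]]]; case: (H x y). Qed.
Lemma vl_ub2 x y : le y (join x y).
Proof. by case: HV => _ [_ [_ [_ [_ [H _]]]]]; case: (H x y) => _ []. Qed.
Lemma vl_lub x y z : le x z -> le y z -> le (join x y) z.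
Proof. by case: HV => _ [_ [_ [_ [_ [H _]]]]]; case: (H x y) => _ [] _; apply. Qed.

Lemma vl_addl x y z : le x y -> le (z + x) (z + y).
Proof. by move=> h; rewrite ![z + _]addrC; apply: vl_add. Qed.

Lemma vl_sub0 x y : le x y -> le 0 (y - x).
Proof. by move=> h; rewrite -(subrr x); apply: vl_add. Qed.

Lemma vl_sub0' x y : le 0 (y - x) -> le x y.
Proof. by move=> h; have := vl_add x h; rewrite add0r subrK. Qed.

Lemma vl_opp x y : le x y -> le (- y) (- x).
Proof.
move=> h; have := vl_add (- x - y) h.
by rewrite addrA subrr add0r addrCA subrr addr0.
Qed.

Lemma vl_opp' x y : le (- y) (- x) -> le x y.
Proof. by move=> /vl_opp; rewrite !opprK. Qed.

Lemma vl_addle x y z w : le x y -> le z w -> le (x + z) (y + w).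
Proof. move=> h1 h2; apply: vl_trans (vl_add z h1) (vl_addl y h2). Qed.

Lemma vl_joinC x y : join x y = join y x.
Proof. by apply: vl_anti; apply: vl_lub; [apply: vl_ub2|apply: vl_ub1|apply: vl_ub2|apply: vl_ub1]. Qed.

Lemma vl_joinD x y c : join (x + c) (y + c) = join x y + c.
Proof.
apply: vl_anti.
  by apply: vl_lub; apply: vl_add; [apply: vl_ub1|apply: vl_ub2].
have h : le (join x y) (join (x + c) (y + c) - c).
  apply: vl_lub; apply: vl_sub0'; rewrite -addrA -opprD (addrC c); apply: vl_sub0;
    [apply: vl_ub1|apply: vl_ub2].
by have := vl_add c h; rewrite subrK.
Qed.

Lemma vl_meet_le1 x y : le (lat_meet join x y) x.
Proof. by apply: vl_opp'; rewrite /lat_meet opprK; apply: vl_ub1. Qed.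
Lemma vl_meet_le2 x y : le (lat_meet join x y) y.
Proof. by apply: vl_opp'; rewrite /lat_meet opprK; apply: vl_ub2. Qed.
Lemma vl_meet_glb x y z : le z x -> le z y -> le z (lat_meet join x y).
Proof.
move=> h1 h2; apply: vl_opp'; rewrite /lat_meet opprK.
by apply: vl_lub; apply: vl_opp.
Qed.

Lemma vl_abs_pos x : le 0 x -> lat_abs join x = x.
Proof.
move=> h; apply: vl_anti; last exact: vl_ub1.
apply: vl_lub; first exact: vl_refl.
by apply: vl_trans (vl_opp h) _; rewrite oppr0.
Qed.

Lemma vl_abs_ge0 x : le 0 (lat_abs join x).
Proof.
set a := lat_abs join x.
have h : le 0 (a + a).
  have := vl_addle (vl_ub1 x (- x)) (vl_ub2 x (- x)).
  by rewrite subrr.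
have hs : 0 <= (2:R)^-1 by rewrite invr_ge0 ler0n.
have := vl_scale hs h.
have e : (2:R)^-1 + 2^-1 = 1 by rewrite [RHS](splitr 1) div1r.
by rewrite scaler0 scalerDr -scalerDl e scale1r.
Qed.

Definition posp x := join x 0.
Definition negp x := join (- x) 0.

Lemma posp_ge0 x : le 0 (posp x). Proof. exact: vl_ub2. Qed.
Lemma negp_ge0 x : le 0 (negp x). Proof. exact: vl_ub2. Qed.

Lemma posp_negp x : posp x - negp x = x.
Proof.
apply/eqP; rewrite subr_eq; apply/eqP.
by rewrite /negp addrC -vl_joinD addNr add0r /posp vl_joinC.
Qed.

Lemma posp_le_abs x : le (posp x) (lat_abs join x).
Proof. apply: vl_lub; [exact: vl_ub1| exact: vl_abs_ge0]. Qed.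
Lemma negp_le_abs x : le (negp x) (lat_abs join x).
Proof. apply: vl_lub; [exact: vl_ub2| exact: vl_abs_ge0]. Qed.

Lemma posp_pos w : le 0 w -> posp w = w.
Proof.
move=> h; apply: vl_anti; last exact: vl_ub1.
by apply: vl_lub; [exact: vl_refl|].
Qed.
Lemma negp_pos w : le 0 w -> negp w = 0.
Proof.
move=> h; apply: vl_anti; last exact: vl_ub2.
apply: vl_lub; last exact: vl_refl.
by have := vl_opp h; rewrite oppr0.
Qed.

Lemma vl_riesz z w1 w2 : le 0 z -> le 0 w1 -> le 0 w2 -> le z (w1 + w2) ->
  exists z1 z2, [/\ z = z1 + z2, le 0 z1, le z1 w1, le 0 z2 & le z2 w2].
Proof.
move=> hz h1 h2 hzw.
exists (lat_meet join z w1), (z - lat_meet join z w1); split.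
- by rewrite addrC subrK.
- exact: vl_meet_glb.
- exact: vl_meet_le2.
- exact/vl_sub0/vl_meet_le1.
rewrite /lat_meet opprK addrC -vl_joinD.
apply: vl_lub; first by rewrite addNr.
by apply: vl_sub0'; rewrite opprD opprK addrA; apply: vl_sub0; rewrite addrC.
Qed.

End VL.

Section RK.
Context {R : realType} {E : normedModType R} (le : E -> E -> Prop) (join : E -> E -> E).
Hypothesis HV : vector_lattice le join.
Hypothesis HN : forall x y, le (lat_abs join x) (lat_abs join y) -> `|x| <= `|y|.
Variable f : E -> R.
Hypothesis fadd : forall x y, f (x + y) = f x + f y.
Hypothesis fscale : forall (a : R) x, f (a *: x) = a * f x.
Variable M : R.
Hypothesis M0 : 0 <= M.
Hypothesis HM : forall z, `|f z| <= M * `|z|.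

Lemma f0 : f 0 = 0.
Proof. by apply: (@addrI _ (f 0)); rewrite addr0 -fadd addr0. Qed.
Lemma fopp x : f (- x) = - f x.
Proof. by rewrite -scaleN1r fscale mulN1r. Qed.
Lemma fsub x y : f (x - y) = f x - f y.
Proof. by rewrite fadd fopp. Qed.

Lemma norm_mono z w : le 0 z -> le z w -> `|z| <= `|w|.
Proof.
move=> hz hzw; apply: HN.
by rewrite !(vl_abs_pos HV) //; exact: (vl_trans HV hz hzw).
Qed.

Definition SS w : set R := fun r => exists z, [/\ le 0 z, le z w & r = f z].
Definition PP w := sup (SS w).

Lemma SS_ne w : le 0 w -> SS w !=set0.
Proof. by move=> hw; exists 0, 0; split => //; [exact: (vl_refl HV _)| rewrite f0]. Qed.

Lemma SS_ub w : le 0 w -> ubound (SS w) (M * `|w|).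
Proof.
move=> hw r [z [hz hzw ->]].
apply: le_trans (ler_norm _) _; apply: le_trans (HM z) _.
by apply: ler_wpM2l => //; apply: norm_mono.
Qed.

Lemma PP_ge w z : le 0 z -> le z w -> f z <= PP w.
Proof.
move=> hz hzw; have hw : le 0 w by exact: (vl_trans HV hz hzw).
apply: ub_le_sup; last by exists z.
by exists (M * `|w|); apply: SS_ub.
Qed.

Lemma PP_le w c : le 0 w -> (forall z, le 0 z -> le z w -> f z <= c) -> PP w <= c.
Proof.
move=> hw h; apply: ge_sup; first exact: SS_ne.
by move=> r [z [hz hzw ->]]; apply: h.
Qed.

Lemma PP_ge0 w : le 0 w -> 0 <= PP w.
Proof. by move=> hw; rewrite -f0; apply: PP_ge => //; exact: (vl_refl HV _). Qed.

Lemma PP_bound w : le 0 w -> PP w <= M * `|w|.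
Proof. by move=> hw; apply: PP_le => // z hz hzw; apply: SS_ub => //; exists z. Qed.

Lemma PP_add w1 w2 : le 0 w1 -> le 0 w2 -> PP (w1 + w2) = PP w1 + PP w2.
Proof.
move=> h1 h2.
have h12 : le 0 (w1 + w2) by have := vl_addle HV h1 h2; rewrite addr0.
apply/eqP; rewrite eq_le; apply/andP; split.
  apply: PP_le => // z hz hzw.
  have [z1 [z2 [-> hz1 hz1w hz2 hz2w]]] := vl_riesz HV hz h1 h2 hzw.
  by rewrite fadd; apply: lerD; apply: PP_ge.
have key : forall z1 z2, le 0 z1 -> le z1 w1 -> le 0 z2 -> le z2 w2 ->
    f z1 + f z2 <= PP (w1 + w2).
  move=> z1 z2 hz1 hz1w hz2 hz2w; rewrite -fadd; apply: PP_ge.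
    by have := vl_addle HV hz1 hz2; rewrite addr0.
  exact: (vl_addle HV hz1w hz2w).
rewrite -lerBrDl; apply: PP_le => // z2 hz2 hz2w.
rewrite lerBrDl -lerBrDr; apply: PP_le => // z1 hz1 hz1w.
by rewrite lerBrDr; apply: key.
Qed.

Lemma PP_scale_le a w : 0 < a -> le 0 w -> PP (a *: w) <= a * PP w.
Proof.
move=> ha hw.
have haw : le 0 (a *: w) by have := vl_scale HV (ltW ha) hw; rewrite scaler0.
apply: PP_le => // z hz hzw.
have -> : z = a *: (a^-1 *: z) by rewrite scalerA mulfV ?gt_eqF // scale1r.
rewrite fscale; apply: ler_wpM2l; first exact: ltW.
have hia : 0 <= a^-1 by rewrite invr_ge0 ltW.
apply: PP_ge.
  by have := vl_scale HV hia hz; rewrite scaler0.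
have := vl_scale HV hia hzw.
by rewrite scalerA mulVf ?gt_eqF // scale1r.
Qed.

Lemma PP_scale a w : 0 < a -> le 0 w -> PP (a *: w) = a * PP w.
Proof.
move=> ha hw; apply/eqP; rewrite eq_le PP_scale_le // andTb.
have haw : le 0 (a *: w) by have := vl_scale HV (ltW ha) hw; rewrite scaler0.
have hia : 0 < a^-1 by rewrite invr_gt0.
have := PP_scale_le hia haw.
rewrite scalerA mulVf ?gt_eqF // scale1r => h.
by have := ler_wpM2l (ltW ha) h; rewrite mulrA mulfV ?gt_eqF // mul1r.
Qed.

Lemma PP0 : PP 0 = 0.
Proof.
apply/eqP; rewrite eq_le PP_ge0 ?andbT; last exact: (vl_refl HV _).
by apply: le_trans (PP_bound (vl_refl HV 0)) _; rewrite normr0 mulr0.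
Qed.

End RK.

Lemma bounded_cont {R : realType} {E : normedModType R} (h : E -> R) (K : R) :
  (forall x y, h (x - y) = h x - h y) -> 0 <= K -> (forall z, `|h z| <= K * `|z|) ->
  continuous h.
Proof.
move=> hsub K0 hK x; apply/cvgrPdist_lt => e e0.
apply/nbhs_normP; exists (e / (K + 1)).
  by rewrite /= divr_gt0 // ltr_wpDl.
move=> t /= ht; rewrite -hsub.
apply: le_lt_trans (hK _) _.
have K1 : 0 < K + 1 by rewrite ltr_wpDl.
apply: (@le_lt_trans _ _ ((K + 1) * `|x - t|)).
  by rewrite ler_wpM2r // lerDl.
by rewrite -ltr_pdivlMl // mulrC.
Qed.

Lemma cont_bounded {R : realType} {E : normedModType R} (f : E -> R) :
  (forall x y, f (x + y) = f x + f y) -> (forall (a : R) x, f (a *: x) = a * f x) ->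
  continuous f -> exists M, 0 <= M /\ forall z, `|f z| <= M * `|z|.
Proof.
move=> fadd fscale fc.
have f0 : f 0 = 0 by apply: (@addrI _ (f 0)); rewrite addr0 -fadd addr0.
have := fc 0; move/cvgr_dist_lt => /(_ 1 ltr01); rewrite f0.
move/nbhs_normP => [d /= d0 hd].
exists (2 / d); split; first by rewrite divr_ge0 // ltW.
move=> z; have [->|z0] := eqVneq z 0; first by rewrite f0 !normr0 mulr0.
have nz : 0 < `|z| by rewrite normr_gt0.
set c := d / (2 * `|z|).
have c0 : 0 < c by rewrite divr_gt0 // mulr_gt0.
have : `|0 - f (c *: z)| < 1.
  apply: hd => /=; rewrite sub0r normrN normrZ gtr0_norm //.
  rewrite /c invfM !mulrA mulfVK ?gt_eqF //.
  by rewrite gtr_pMr // invf_lt1 // ltr1n.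
rewrite sub0r normrN fscale normrM gtr0_norm // => hlt.
have : `|f z| < c^-1.
  have cn : c != 0 by rewrite gt_eqF.
  rewrite -(mulKf cn `|f z|) -[X in _ < X]mulr1 ltr_pM2l //.
  by rewrite invr_gt0.
move/ltW/le_trans; apply.
by rewrite /c invf_div mulrAC.
Qed.

Section GGsec.
Context {R : realType} {E : normedModType R} (le : E -> E -> Prop) (join : E -> E -> E).
Hypothesis HV : vector_lattice le join.
Hypothesis HN : forall x y, le (lat_abs join x) (lat_abs join y) -> `|x| <= `|y|.
Variable f : E -> R.
Hypothesis fadd : forall x y, f (x + y) = f x + f y.
Hypothesis fscale : forall (a : R) x, f (a *: x) = a * f x.
Variable M : R.
Hypothesis M0 : 0 <= M.
Hypothesis HM : forall z, `|f z| <= M * `|z|.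

Local Notation P := (PP le f).
Let Padd := PP_add HV HN fadd M0 HM.
Let Pscale := PP_scale HV HN fadd fscale M0 HM.
Let Pbound := PP_bound HV HN fadd M0 HM.
Let Pge0 := PP_ge0 HV HN fadd M0 HM.
Let P0 := PP0 HV HN fadd M0 HM.

Definition GG x := P (posp join x) - P (negp join x).

Lemma addge0 p q : le 0 p -> le 0 q -> le 0 (p + q).
Proof. by move=> hp hq; have := vl_addle HV hp hq; rewrite addr0. Qed.

Lemma GG_diff p q : le 0 p -> le 0 q -> GG (p - q) = P p - P q.
Proof.
move=> hp hq; set x := p - q.
have h := posp_negp HV x.
have e : posp join x + q = p + negp join x.
  by rewrite -[posp join x](subrK (negp join x)) h /x addrAC subrK.
have e' : P (posp join x) + P q = P p + P (negp join x).
  rewrite -(Padd (posp_ge0 HV x) hq) -(Padd hp (negp_ge0 HV x)); congr (PP le f _); exact: e.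
move: e'; rewrite /GG /x => e'; lra.
Qed.

Lemma GG_pos w : le 0 w -> GG w = P w.
Proof. by move=> hw; rewrite /GG (posp_pos HV hw) (negp_pos HV hw) P0 subr0. Qed.

Lemma GG_add x y : GG (x + y) = GG x + GG y.
Proof.
have e : x + y = (posp join x + posp join y) - (negp join x + negp join y).
  by rewrite opprD addrACA !(posp_negp HV).
have hpx := posp_ge0 HV x; have hpy := posp_ge0 HV y.
have hnx := negp_ge0 HV x; have hny := negp_ge0 HV y.
rewrite e (GG_diff (addge0 hpx hpy) (addge0 hnx hny)) (Padd hpx hpy) (Padd hnx hny) /GG; lra.
Qed.

Lemma GG_scale (a : R) x : GG (a *: x) = a * GG x.
Proof.
have hx := posp_negp HV x.
have [a0|a0|->] := ltgtP a 0; last first.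
- by rewrite scale0r mul0r GG_pos ?P0 //; exact: (vl_refl HV _).
- have e : a *: x = a *: posp join x - a *: negp join x by rewrite -scalerBr hx.
  have hp : le 0 (a *: posp join x).
    by have := vl_scale HV (ltW a0) (posp_ge0 HV x); rewrite scaler0.
  have hn : le 0 (a *: negp join x).
    by have := vl_scale HV (ltW a0) (negp_ge0 HV x); rewrite scaler0.
  by rewrite e GG_diff // (Pscale a0 (posp_ge0 HV x)) (Pscale a0 (negp_ge0 HV x)) /GG; lra.
- have na : 0 < - a by rewrite oppr_gt0.
  have e : a *: x = (- a) *: negp join x - (- a) *: posp join x.
    by rewrite -scalerBr -opprB scalerN -scaleNr opprK hx.
  have hp : le 0 ((- a) *: posp join x).
    by have := vl_scale HV (ltW na) (posp_ge0 HV x); rewrite scaler0.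
  have hn : le 0 ((- a) *: negp join x).
    by have := vl_scale HV (ltW na) (negp_ge0 HV x); rewrite scaler0.
  by rewrite e GG_diff // (Pscale na (posp_ge0 HV x)) (Pscale na (negp_ge0 HV x)) /GG; lra.
Qed.

Lemma GG_bound x : `|GG x| <= (M + M) * `|x|.
Proof.
have hp : `|posp join x| <= `|x|.
  by apply: HN; rewrite (vl_abs_pos HV (posp_ge0 HV x)); apply: posp_le_abs.
have hn : `|negp join x| <= `|x|.
  by apply: HN; rewrite (vl_abs_pos HV (negp_ge0 HV x)); apply: negp_le_abs.
have b1 := Pbound (posp_ge0 HV x).
have b2 := Pbound (negp_ge0 HV x).
have g1 := Pge0 (posp_ge0 HV x).
have g2 := Pge0 (negp_ge0 HV x).
have m1 : M * `|posp join x| <= M * `|x| by rewrite ler_wpM2l.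
have m2 : M * `|negp join x| <= M * `|x| by rewrite ler_wpM2l.
rewrite /GG mulrDl ler_norml; apply/andP; split; lra.
Qed.

Lemma GG_clf : is_clf GG.
Proof.
split; [exact: GG_add | exact: GG_scale |].
apply: (@bounded_cont _ _ GG (M + M)).
- by move=> x y; rewrite GG_add -scaleN1r GG_scale; lra.
- by rewrite addr_ge0.
- exact: GG_bound.
Qed.

End GGsec.

Unset Implicit Arguments.
Set Strict Implicit.
Local Close Scope classical_set_scope.

Theorem lemma2p16 (R : realType) (E : completeNormedModType R)
  (le : E -> E -> Prop) (join : E -> E -> E) (mul : E -> E -> E) :
  banach_f_algebra le join mul ->
  (mw_continuous le join mul <->
   forall (D : Type) (leD : D -> D -> Prop), directed leD ->
     forall x : D -> E, decr_to_0 le leD x -> mw_cvg le join mul leD x 0).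
Proof.
case=> [[HV [_ [Hdl [_ [_ [Hpos _]]]]]] HN _].
split.
  move=> mwc D leD dir x hx; apply: mwc => //.
  exists D, leD, x; split => // b; exists b => a hab.
  case: hx => hdec hpos _.
  by rewrite subr0 (vl_abs_pos HV (hpos a)); apply: hdec.
move=> H D leD dir x [B [leB [y [dirB hy hcv]]]] u hu f [fadd fscale fc].
have [M [M0 HM]] := cont_bounded fadd fscale fc.
have gclf := GG_clf HV HN fadd fscale M0 HM.
set g := GG le join f in gclf.
have f0 : f 0 = 0 by apply: (@addrI _ (f 0)); rewrite addr0 -fadd addr0.
have g0 : g 0 = 0.
  by rewrite /g (GG_pos HV HN fadd M0 HM (vl_refl HV 0)) (PP0 HV HN fadd M0 HM).
have hyw := H B leB dirB y hy u hu.
have hyg := hyw g gclf.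
have hyf := hyw f (And3 fadd fscale fc).
case: hy => ydec ypos _.
have habs : forall b, lat_abs join (y b - 0) = y b.
  by move=> b; rewrite subr0 (vl_abs_pos HV (ypos b)).
move=> e e0.
have e2 : 0 < e / 2 by rewrite divr_gt0.
have [b1 hb1] := hyg _ e2.
have [b2 hb2] := hyf _ e2.
case: dirB => _ Brefl _ Bup.
have [b [hb1b hb2b]] := Bup b1 b2.
have := hb1 b hb1b; have := hb2 b hb2b.
rewrite habs => hfw hgw; rewrite [f 0]f0 subr0 in hfw; rewrite [g 0]g0 subr0 in hgw.
have [a0 ha0] := hcv b.
exists a0 => a ha; rewrite [f 0]f0 subr0.
set v := lat_abs join (x a - 0).
set z := mul v u.
set w := mul (y b) u.
have hv : le 0 v := vl_abs_ge0 HV _.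
have hz : le 0 z := Hpos _ _ hv hu.
have hw : le 0 w := Hpos _ _ (ypos b) hu.
have ewz : w - z = mul (y b - v) u.
  by rewrite /w /z -[y b in LHS](subrK v) [in LHS]Hdl addrK.
have hzw : le z w.
  have h1 : le 0 (mul (y b - v) u) := Hpos _ _ (vl_sub0 HV (ha0 a ha)) hu.
  rewrite -ewz in h1; exact: (vl_sub0' HV h1).
have hwz0 : le 0 (w - z) := vl_sub0 HV hzw.
have hwzw : le (w - z) w.
  by apply: (vl_sub0' HV); rewrite opprB addrC subrK.
have up : f z <= g w.
  by rewrite /g (GG_pos HV HN fadd M0 HM hw); exact: (PP_ge HV HN M0 HM hz hzw).
have lo : f (w - z) <= g w.
  by rewrite /g (GG_pos HV HN fadd M0 HM hw); exact: (PP_ge HV HN M0 HM hwz0 hwzw).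
have ef : f (w - z) = f w - f z.
  by rewrite fadd -scaleN1r fscale mulN1r.
rewrite ef in lo.
move: hfw hgw; rewrite !ltr_norml => /andP [hf1 hf2] /andP [hg1 hg2].
apply/andP; split; lra.
Qed.
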